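(* The 3-graph $J_4$ with vertex set $[5]$ and edges $123,124,125,134,135,145$ is forbidden for every triangle $T$.
   Context: A 3-graph is a 3-uniform hypergraph; $G$ is $F$-free if it has no (not necessarily induced) subhypergraph isomorphic to $F$. For a triangle $T$ with side lengths $a,b,c$ and $\varepsilon>0$, with $\varepsilon'=\varepsilon\min\{a,b,c\}$, a triangle $A'B'C'$ is $\varepsilon$-congruent to $T$ if there are $A,B,C\in\mathbb{R}^2$ with $ABC$ congruent to $T$ and $A',B',C'$ within distance $\varepsilon'$ of $A,B,C$ respectively. For finite $P\subseteq\mathbb{R}^2$, $\mathcal{H}(T,P,\varepsilon)$ is the 3-graph on $P$ whose edges are triples forming triangles $\varepsilon$-congruent to $T$. A 3-graph $H$ is forbidden for $T$ if there exists $\varepsilon>0$ such that for every $P\subseteq\mathbb{R}^2$ with $|P|=|V(H)|$, $\mathcal{H}(T,P,\varepsilon)$ is $H$-free. *)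

(* Defs.v *)
From Stdlib Require Import Reals Lra List.
Import ListNotations.
Open Scope R_scope.

Definition pt : Type := (R * R)%type.

Definition dist2 (p q : pt) : R :=
  sqrt ((fst p - fst q) ^ 2 + (snd p - snd q) ^ 2).

Definition is_triangle (a b c : R) : Prop :=
  0 < a /\ 0 < b /\ 0 < c /\ a < b + c /\ b < a + c /\ c < a + b.

Definition congruent_to (a b c : R) (A B C : pt) : Prop :=
  dist2 B C = a /\ dist2 C A = b /\ dist2 A B = c.

Definition eps_congruent (a b c eps : R) (A' B' C' : pt) : Prop :=
  exists A B C : pt, congruent_to a b c A B C /\
    dist2 A' A <= eps * Rmin a (Rmin b c) /\
    dist2 B' B <= eps * Rmin a (Rmin b c) /\
    dist2 C' C <= eps * Rmin a (Rmin b c).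

Definition HTPe_edge (a b c eps : R) (P : list pt) (x y z : pt) : Prop :=
  In x P /\ In y P /\ In z P /\ x <> y /\ y <> z /\ x <> z /\
  (eps_congruent a b c eps x y z \/ eps_congruent a b c eps x z y \/
   eps_congruent a b c eps y x z \/ eps_congruent a b c eps y z x \/
   eps_congruent a b c eps z x y \/ eps_congruent a b c eps z y x).

Record hyp3 := { hv : nat; hedges : list (nat * nat * nat) }.

(* G (a 3-graph on the points P, given by its edge relation) contains a
   (not necessarily induced) copy of H: an injective map from V(H) into P
   sending every edge of H to an edge of G. *)
Definition contains_copy (H : hyp3) (P : list pt) (G : pt -> pt -> pt -> Prop) : Prop :=
  exists f : nat -> pt,
    (forall i, (i < hv H)%nat -> In (f i) P) /\
    (forall i j, (i < hv H)%nat -> (j < hv H)%nat -> f i = f j -> i = j) /\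
    (forall i j k, In (i, j, k) (hedges H) -> G (f i) (f j) (f k)).

Definition forbidden (H : hyp3) (a b c : R) : Prop :=
  exists eps : R, 0 < eps /\
    forall P : list pt, NoDup P -> length P = hv H ->
      ~ contains_copy H P (HTPe_edge a b c eps P).

(* J_4 on [5] = {1,...,5}, encoded on {0,...,4} (vertex i+1 ↦ i):
   edges 123,124,125,134,135,145. *)
Definition J4 : hyp3 :=
  {| hv := 5;
     hedges := [(0,1,2); (0,1,3); (0,1,4); (0,2,3); (0,2,4); (0,3,4)]%nat |}.

(* Main.v *)
Require Import Defs.
From Stdlib Require Import Reals.
From Stdlib Require Import Lra List.
Import ListNotations.
Open Scope R_scope.

Definition S3 (A B C : pt) : R :=
  (fst B - fst A) * (snd C - snd A) - (snd B - snd A) * (fst C - fst A).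

Lemma abs_bd x B : Rabs x <= B -> - B <= x <= B.
Proof. unfold Rabs; destruct (Rcase_abs x); intros; lra. Qed.

Lemma cr_bd p1 p2 q1 q2 B1 B2 :
  sqrt (p1 ^ 2 + p2 ^ 2) <= B1 -> sqrt (q1 ^ 2 + q2 ^ 2) <= B2 ->
  Rabs (p1 * q2 - p2 * q1) <= B1 * B2.
Proof.
  intros H1 H2.
  assert (Hn1 := sqrt_pos (p1 ^ 2 + p2 ^ 2)).
  assert (Hn2 := sqrt_pos (q1 ^ 2 + q2 ^ 2)).
  apply Rle_trans with (sqrt (p1 ^ 2 + p2 ^ 2) * sqrt (q1 ^ 2 + q2 ^ 2)).
  - rewrite <- sqrt_mult by nra.
    rewrite <- sqrt_Rsqr_abs. apply sqrt_le_1_alt. unfold Rsqr.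
    assert (0 <= (p1 * q1 + p2 * q2) ^ 2) by (apply pow2_ge_0).
    assert (E : (p1 ^ 2 + p2 ^ 2) * (q1 ^ 2 + q2 ^ 2) =
      (p1 * q2 - p2 * q1) * (p1 * q2 - p2 * q1) + (p1 * q1 + p2 * q2) ^ 2) by ring.
    rewrite E. lra.
  - apply Rmult_le_compat; lra.
Qed.

Lemma perturb (A B C A' B' C' : pt) d M :
  dist2 A' A <= d -> dist2 B' B <= d -> dist2 C' C <= d ->
  dist2 A B <= M -> dist2 C A <= M ->
  Rabs (S3 A' B' C' - S3 A B C) <= 4 * M * d + 3 * (d * d).
Proof.
  unfold dist2, S3; intros Hu Hv Hw HP HQ.
  set (u1 := fst A' - fst A) in *. set (u2 := snd A' - snd A) in *.
  set (v1 := fst B' - fst B) in *. set (v2 := snd B' - snd B) in *.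
  set (w1 := fst C' - fst C) in *. set (w2 := snd C' - snd C) in *.
  set (P1 := fst A - fst B) in *. set (P2 := snd A - snd B) in *.
  set (Q1 := fst C - fst A) in *. set (Q2 := snd C - snd A) in *.
  match goal with |- Rabs ?x <= _ =>
  replace x with (- (P1 * w2 - P2 * w1) + (P1 * u2 - P2 * u1) + (v1 * Q2 - v2 * Q1)
     + (v1 * w2 - v2 * w1) - (v1 * u2 - v2 * u1) - (u1 * Q2 - u2 * Q1)
     - (u1 * w2 - u2 * w1)) by (unfold u1, u2, v1, v2, w1, w2, P1, P2, Q1, Q2; ring) end.
  pose proof (abs_bd _ _ (cr_bd _ _ _ _ _ _ HP Hw)).
  pose proof (abs_bd _ _ (cr_bd _ _ _ _ _ _ HP Hu)).
  pose proof (abs_bd _ _ (cr_bd _ _ _ _ _ _ Hv HQ)).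
  pose proof (abs_bd _ _ (cr_bd _ _ _ _ _ _ Hv Hw)).
  pose proof (abs_bd _ _ (cr_bd _ _ _ _ _ _ Hv Hu)).
  pose proof (abs_bd _ _ (cr_bd _ _ _ _ _ _ Hu HQ)).
  pose proof (abs_bd _ _ (cr_bd _ _ _ _ _ _ Hu Hw)).
  apply Rabs_le. lra.
Qed.

Definition Qv (a b c : R) := c ^ 2 * b ^ 2 - ((c ^ 2 + b ^ 2 - a ^ 2) / 2) ^ 2.

Lemma Qv_pos a b c : is_triangle a b c -> 0 < Qv a b c.
Proof.
  unfold is_triangle, Qv; intros (Ha & Hb & Hc & H1 & H2 & H3).
  assert (E : c ^ 2 * b ^ 2 - ((c ^ 2 + b ^ 2 - a ^ 2) / 2) ^ 2 =
    (a - b + c) * (a + b - c) * ((b + c - a) * (b + c + a)) / 4) by field.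
  rewrite E.
  assert (0 < (a - b + c) * (a + b - c)) by (apply Rmult_lt_0_compat; lra).
  assert (0 < (b + c - a) * (b + c + a)) by (apply Rmult_lt_0_compat; lra).
  assert (0 < (a - b + c) * (a + b - c) * ((b + c - a) * (b + c + a))) by
    (apply Rmult_lt_0_compat; lra).
  lra.
Qed.

Lemma ideal_area a b c A B C : congruent_to a b c A B C ->
  Rabs (S3 A B C) = sqrt (Qv a b c).
Proof.
  intros (Ha & Hb & Hc).
  rewrite <- sqrt_Rsqr_abs. f_equal. unfold Rsqr, Qv.
  rewrite <- Ha, <- Hb, <- Hc. unfold dist2, S3.
  rewrite !pow2_sqrt by (apply Rplus_le_le_0_compat; apply pow2_ge_0). field.
Qed.

Lemma cong_bound a b c e X Y Z : is_triangle a b c ->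
  eps_congruent a b c e X Y Z ->
  let d := e * Rmin a (Rmin b c) in
  sqrt (Qv a b c) - (4 * (a + b + c) * d + 3 * (d * d)) <= Rabs (S3 X Y Z) <=
  sqrt (Qv a b c) + (4 * (a + b + c) * d + 3 * (d * d)).
Proof.
  intros Ht (A & B & C & Hcong & H1 & H2 & H3) d.
  pose proof (ideal_area _ _ _ _ _ _ Hcong) as HK.
  destruct Hcong as (Ha & Hb & Hc).
  destruct Ht as (Pa & Pb & Pc & _).
  assert (HP : dist2 A B <= a + b + c) by lra.
  assert (HQ : dist2 C A <= a + b + c) by lra.
  pose proof (abs_bd _ _ (perturb _ _ _ _ _ _ d (a + b + c) H1 H2 H3 HP HQ)) as Hd.
  rewrite <- HK.
  revert Hd. generalize (S3 X Y Z) (S3 A B C). intros s t.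
  unfold Rabs; destruct (Rcase_abs s); destruct (Rcase_abs t); intros; lra.
Qed.

Lemma edge_bound a b c e P X Y Z : is_triangle a b c ->
  HTPe_edge a b c e P X Y Z ->
  let d := e * Rmin a (Rmin b c) in
  sqrt (Qv a b c) - (4 * (a + b + c) * d + 3 * (d * d)) <= Rabs (S3 X Y Z) <=
  sqrt (Qv a b c) + (4 * (a + b + c) * d + 3 * (d * d)).
Proof.
  intros Ht (_ & _ & _ & _ & _ & _ & H) d.
  destruct H as [H|[H|[H|[H|[H|H]]]]]; pose proof (cong_bound _ _ _ _ _ _ _ Ht H) as B;
  simpl in B; fold d in B.
  - exact B.
  - replace (S3 X Z Y) with (- S3 X Y Z) in B by (unfold S3; ring).
    rewrite Rabs_Ropp in B; exact B.
  - replace (S3 Y X Z) with (- S3 X Y Z) in B by (unfold S3; ring).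
    rewrite Rabs_Ropp in B; exact B.
  - replace (S3 Y Z X) with (S3 X Y Z) in B by (unfold S3; ring). exact B.
  - replace (S3 Z X Y) with (S3 X Y Z) in B by (unfold S3; ring). exact B.
  - replace (S3 Z Y X) with (- S3 X Y Z) in B by (unfold S3; ring).
    rewrite Rabs_Ropp in B; exact B.
Qed.

Lemma plucker (p x1 x2 x3 x4 : pt) :
  S3 p x1 x2 * S3 p x3 x4 - S3 p x1 x3 * S3 p x2 x4 + S3 p x1 x4 * S3 p x2 x3 = 0.
Proof. unfold S3; ring. Qed.

Lemma prod_bd K s t : 0 < K ->
  9 / 10 * K <= Rabs s <= 11 / 10 * K -> 9 / 10 * K <= Rabs t <= 11 / 10 * K ->
  81 / 100 * (K * K) <= Rabs (s * t) <= 121 / 100 * (K * K).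
Proof.
  intros HK Hs Ht. rewrite Rabs_mult.
  assert (0 <= Rabs s) by apply Rabs_pos. split; nra.
Qed.

Lemma final K s12 s13 s14 s23 s24 s34 : 0 < K ->
  9 / 10 * K <= Rabs s12 <= 11 / 10 * K ->
  9 / 10 * K <= Rabs s13 <= 11 / 10 * K ->
  9 / 10 * K <= Rabs s14 <= 11 / 10 * K ->
  9 / 10 * K <= Rabs s23 <= 11 / 10 * K ->
  9 / 10 * K <= Rabs s24 <= 11 / 10 * K ->
  9 / 10 * K <= Rabs s34 <= 11 / 10 * K ->
  s12 * s34 - s13 * s24 + s14 * s23 = 0 -> False.
Proof.
  intros HK H12 H13 H14 H23 H24 H34 E.
  pose proof (prod_bd _ _ _ HK H12 H34) as P1.
  pose proof (prod_bd _ _ _ HK H13 H24) as P2.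
  pose proof (prod_bd _ _ _ HK H14 H23) as P3.
  assert (HKK : 0 < K * K) by nra.
  revert HKK P1 P2 P3 E. generalize (s12 * s34) (s13 * s24) (s14 * s23) (K * K).
  intros x y z k.
  unfold Rabs; destruct (Rcase_abs x); destruct (Rcase_abs y); destruct (Rcase_abs z);
  intros; lra.
Qed.

Theorem lemma2p7 : forall a b c : R, is_triangle a b c -> forbidden J4 a b c.
Proof.
  intros a b c Ht.
  pose proof (Qv_pos _ _ _ Ht) as HQ.
  pose proof (sqrt_lt_R0 _ HQ) as HK.
  set (K := sqrt (Qv a b c)) in *.
  pose proof Ht as (Pa & Pb & Pc & _).
  set (m := Rmin a (Rmin b c)).
  assert (Hm : 0 < m).
  { unfold m, Rmin. destruct (Rle_dec b c); destruct (Rle_dec a _); lra. }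
  set (M := a + b + c).
  set (d0 := Rmin 1 (K / (40 * (M + 1)))).
  assert (Hd0a : d0 <= 1) by apply Rmin_l.
  assert (Hd0b : d0 <= K / (40 * (M + 1))) by apply Rmin_r.
  assert (Hd0p : 0 < d0).
  { unfold d0, Rmin. destruct (Rle_dec _ _); [lra|].
    apply Rdiv_lt_0_compat; unfold M; lra. }
  exists (d0 / m). split; [apply Rdiv_lt_0_compat; lra|].
  intros P _ _ (f & _ & _ & Hedge).
  assert (Hd : d0 / m * Rmin a (Rmin b c) = d0) by (fold m; field; lra).
  assert (Heta : 4 * (a + b + c) * d0 + 3 * (d0 * d0) <= K / 10).
  { fold M.
    assert (d0 * (40 * (M + 1)) <= K).
    { apply (Rmult_le_compat_r (40 * (M + 1))) in Hd0b; [|unfold M; lra].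
      unfold Rdiv in Hd0b. rewrite Rmult_assoc, Rinv_l in Hd0b by (unfold M; lra). lra. }
    assert (0 <= M) by (unfold M; lra).
    nra. }
  assert (B : forall i j k, In (i, j, k) (hedges J4) ->
            9 / 10 * K <= Rabs (S3 (f i) (f j) (f k)) <= 11 / 10 * K).
  { intros i j k Hin. pose proof (edge_bound _ _ _ _ _ _ _ _ Ht (Hedge _ _ _ Hin)) as Hb.
    simpl in Hb. rewrite Hd in Hb. fold K in Hb. lra. }
  apply (final K (S3 (f 0%nat) (f 1%nat) (f 2%nat)) (S3 (f 0%nat) (f 1%nat) (f 3%nat))
           (S3 (f 0%nat) (f 1%nat) (f 4%nat)) (S3 (f 0%nat) (f 2%nat) (f 3%nat))
           (S3 (f 0%nat) (f 2%nat) (f 4%nat)) (S3 (f 0%nat) (f 3%nat) (f 4%nat))); auto;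
  try (apply B; simpl; tauto).
  apply plucker.
Qed.
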